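(* Let $(s,\xi)$ be a Nash equilibrium of the coordination mechanism described in the context in a game with unit activation costs. Then for every job $j$, either $\xi_j=0$ or every slot in $[r_j,d_j)\setminus\{s_j\}$ is unoccupied (has no job assigned to it under $s$).
   Context: Unit activation costs means $c(0)=0$ and $c(l)=1$ for every integer $l>0$. A game consists of the cost function $c$, slots $t=1,\dots,T$, and a set of jobs, each job $j$ having integer release time $r_j$ and deadline $d_j$ with $0<r_j<d_j<T$. In the coordination mechanism, each job $j$ chooses a pair $(s_j,\xi_j)$ with $s_j$ an integer in $[r_j,d_j)$ and payment $\xi_j\ge0$. The load of slot $t$ is $l_t(s)=|\{j:s_j=t\}|$. Slot $t$ is opened iff $\sum_{j:s_j=t}\xi_j\ge c(l_t(s))$; a job whose slot is not opened has infinite cost, otherwise its cost is $\xi_j$. A profile $(s,\xi)$ is a Nash equilibrium if for every job $j$: (i) $\sum_{j':s_{j'}=s_j}\xi_{j'}\ge c(l_{s_j}(s))$; (ii) for every $t\in[r_j,d_j)\setminus\{s_j\}$, $\xi_j\le\max\{0,\,c(l_t(s)+1)-\sum_{j':s_{j'}=t}\xi_{j'}\}$; (iii) $\xi_j\le\max\{0,\,c(l_{s_j}(s))-\sum_{j':s_{j'}=s_j,\,j'\ne j}\xi_{j'}\}$. *)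

(* Defs.v *)
From mathcomp Require Import all_boot all_order all_algebra.
Set Implicit Arguments. Unset Strict Implicit. Unset Printing Implicit Defensive.
Import Order.TTheory GRing.Theory Num.Theory.
Local Open Scope ring_scope.

(* Jobs are indexed by a finite type J; slots are natural numbers.
   r j, d j : release time and deadline; s j : chosen slot; xi j : payment. *)

Definition unit_cost (R : realFieldType) (l : nat) : R := if l == 0%N then 0 else 1.

Definition load (J : finType) (s : J -> nat) (t : nat) : nat := #|[set j | s j == t]|.

Definition pay (R : realFieldType) (J : finType) (s : J -> nat) (xi : J -> R) (t : nat) : R :=
  \sum_(j | s j == t) xi j.

Definition pay_others (R : realFieldType) (J : finType) (s : J -> nat) (xi : J -> R)
  (t : nat) (j : J) : R :=
  \sum_(j' | (s j' == t) && (j' != j)) xi j'.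

Definition valid_game (J : finType) (T : nat) (r d : J -> nat) : Prop :=
  forall j, (0 < r j)%N /\ (r j < d j)%N /\ (d j < T)%N.

Definition valid_profile (R : realFieldType) (J : finType) (r d : J -> nat)
  (s : J -> nat) (xi : J -> R) : Prop :=
  forall j, (r j <= s j)%N /\ (s j < d j)%N /\ 0 <= xi j.

Definition nash_eq (R : realFieldType) (c : nat -> R) (J : finType) (r d : J -> nat)
  (s : J -> nat) (xi : J -> R) : Prop :=
  forall j,
    [/\ pay s xi (s j) >= c (load s (s j)),
        (forall t, (r j <= t)%N -> (t < d j)%N -> t != s j ->
           xi j <= Num.max 0 (c (load s t).+1 - pay s xi t))
      & xi j <= Num.max 0 (c (load s (s j)) - pay_others s xi (s j) j)].

(* Main.v *)
Require Import Defs.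
From mathcomp Require Import all_boot all_order all_algebra.
Import Order.TTheory GRing.Theory Num.Theory.
Local Open Scope ring_scope.

Theorem lemma5 (R : realFieldType) (J : finType) (T : nat) (r d : J -> nat)
  (s : J -> nat) (xi : J -> R) :
  valid_game T r d ->
  valid_profile r d s xi ->
  nash_eq (@unit_cost R) r d s xi ->
  forall j : J,
    xi j = 0 \/
    (forall t : nat, (r j <= t)%N -> (t < d j)%N -> t != s j -> load s t = 0%N).
Proof.
move=> _ Hp Hn j.
case: (eqVneq (xi j) 0) => [->|nz]; [by left|right].
move=> t h1 h2 h3.
case: (posnP (load s t)) => // lpos; exfalso.
have := lpos; rewrite /load card_gt0 => /set0Pn [k]; rewrite inE => /eqP skt.
have [Hi _ _] := Hn k.
have [_ Hii _] := Hn j.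
have := Hii t h1 h2 h3.
move: Hi; rewrite skt /unit_cost.
have -> : (load s t == 0%N) = false by apply/negbTE; rewrite -lt0n lpos.
move=> Hpay.
have -> : Num.max 0 (1 - pay s xi t) = 0.
  by apply/max_idPl; rewrite subr_le0.
have [_ [_ H0]] := Hp j.
move=> Hle; move/eqP: nz; apply; apply/eqP; rewrite eq_le Hle H0.
done.
Qed.
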